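(* Let $M^n$ be a hypersurface in $\mathbb{R}^{n+1}$ and $p\in M$. Suppose that at $p$ we have $H>0$ and $\|\mathring{A}\|^2=\varepsilon H^2$ for some $\varepsilon\in\left(0,\frac{1}{n(n-1)}\right)$. Then at $p$ $$nC-(1+n\varepsilon)H\|A\|^2\geq \varepsilon(1+n\varepsilon)\left(1-\sqrt{n(n-1)\varepsilon}\right)H^3,$$ where $C=\kappa_1^3+\dots+\kappa_n^3$.
   Context: $\kappa_1\le\dots\le\kappa_n$ are the principal curvatures at $p$, $H=\sum_i\kappa_i$ is the mean curvature, $\|A\|^2=\sum_i\kappa_i^2$, and $\|\mathring{A}\|^2=\|A\|^2-\frac1nH^2$ is the squared norm of the trace-free second fundamental form $h_{ij}-\frac1nHg_{ij}$. *)

(* Defs.v *)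
(* Pointwise data of a hypersurface M^n in R^{n+1} at p:
   the principal curvatures kappa_1,...,kappa_n, indexed by 'I_n. *)
From mathcomp Require Import all_boot all_order all_algebra.
Set Implicit Arguments. Unset Strict Implicit. Unset Printing Implicit Defensive.
Import Order.TTheory GRing.Theory Num.Theory.
Local Open Scope ring_scope.

Definition meanH (R : rcfType) (n : nat) (k : 'I_n -> R) : R := \sum_(i < n) k i.
Definition normA2 (R : rcfType) (n : nat) (k : 'I_n -> R) : R := \sum_(i < n) k i ^+ 2.
Definition normAo2 (R : rcfType) (n : nat) (k : 'I_n -> R) : R :=
  normA2 k - (meanH k) ^+ 2 / n%:R.
Definition cubC (R : rcfType) (n : nat) (k : 'I_n -> R) : R := \sum_(i < n) k i ^+ 3.

(* Main.v *)
Require Import Defs.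
From mathcomp Require Import all_boot all_order all_algebra.
From mathcomp Require Import ring lra.
Set Implicit Arguments. Unset Strict Implicit.
Import Order.TTheory GRing.Theory Num.Theory.
Local Open Scope ring_scope.

Lemma sum_cubic (R : rcfType) (n : nat) (k : 'I_n -> R) (a b c : R) :
  \sum_(i < n) (k i ^+ 3 + a * k i ^+ 2 + b * k i + c) =
  cubC k + a * normA2 k + b * meanH k + n%:R * c.
Proof.
rewrite !big_split /= -!mulr_sumr sumr_const card_ord /cubC /normA2 /meanH.
by rewrite mulr_natl.
Qed.

Lemma sum_sq_shift (R : rcfType) (n : nat) (k : 'I_n -> R) (t : R) :
  \sum_(i < n) (k i - t) ^+ 2 = normA2 k - 2 * t * meanH k + n%:R * t ^+ 2.
Proof.
have -> : \sum_(i < n) (k i - t) ^+ 2 =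
   \sum_(i < n) (k i ^+ 2 + (- 2 * t) * k i + t ^+ 2).
  by apply: eq_bigr => i _; ring.
rewrite !big_split /= -!mulr_sumr sumr_const card_ord /normA2 /meanH mulr_natl.
ring.
Qed.

Lemma term_le_sum (R : rcfType) (n : nat) (F : 'I_n -> R) (i : 'I_n) :
  (forall j, 0 <= F j) -> F i <= \sum_(j < n) F j.
Proof.
move=> H0; rewrite (bigD1 i) //= lerDl; apply: sumr_ge0 => j _; exact: H0.
Qed.

Lemma aux1 (R : rcfType) (N H A2 y e s : R) : 1 < N ->
  A2 = H ^+ 2 / N + e * H ^+ 2 -> e = s ^+ 2 / (N * (N - 1)) -> 0 <= s -> 0 < H ->
  (y - (H - y) / (N - 1)) ^+ 2 <= A2 - 2 * ((H - y) / (N - 1)) * H + N * ((H - y) / (N - 1)) ^+ 2 ->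
  (1 - s) * H / N <= y.
Proof.
move=> N1 hA he s0 H0 hD.
pose D := A2 - 2 * ((H - y) / (N - 1)) * H + N * ((H - y) / (N - 1)) ^+ 2 - (y - (H - y) / (N - 1)) ^+ 2.
have {}hD : 0 <= D by rewrite /D subr_ge0.
have N0 : N != 0 by apply/eqP; lra.
have N10 : N - 1 != 0 by apply/eqP; lra.
have hid : (N * y - H) ^+ 2 = (s * H) ^+ 2 - N * (N - 1) * D.
  rewrite /D hA he; field; by rewrite N0 N10.
have hD0 : 0 <= N * (N - 1) * D by apply: mulr_ge0 => //; apply: mulr_ge0; lra.
have h2 : (N * y - H) ^+ 2 <= (s * H) ^+ 2 by lra.
have h3 : - (s * H) <= N * y - H.
  have sH : 0 <= s * H by apply: mulr_ge0; lra.
  nra.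
rewrite ler_pdivrMr; last lra.
lra.
Qed.

Lemma aux2 (R : rcfType) (N H A2 C e s : R) : 1 < N ->
  A2 = H ^+ 2 / N + e * H ^+ 2 -> e = s ^+ 2 / (N * (N - 1)) -> 0 <= s -> 0 < H ->
  0 < e ->
  let m := H / N + s * H / (N * (N - 1)) in
  let r := (1 - s) * H / N in
  0 <= C - (2 * m + r) * A2 + (m ^+ 2 + 2 * m * r) * H - N * (m ^+ 2 * r) ->
  e * (1 + N * e) * (1 - s) * H ^+ 3 <= N * C - (1 + N * e) * H * A2.
Proof.
move=> N1 hA he s0 H0 e0 m r hT.
move: hT; set T := (X in 0 <= X) => hT.
have N0 : N != 0 by apply/eqP; lra.
have N10 : N - 1 != 0 by apply/eqP; lra.
set K := e * H ^+ 3 * s * (1 - s) ^+ 2 / (N - 1).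
have hid : N * C - (1 + N * e) * H * A2 - e * (1 + N * e) * (1 - s) * H ^+ 3
   = N * T + K.
  rewrite /K /T /m /r hA he; field; by rewrite N0 N10.
have K0 : 0 <= K.
  rewrite /K; apply: divr_ge0; last lra.
  apply: mulr_ge0; last exact: sqr_ge0.
  apply: mulr_ge0 => //; apply: mulr_ge0; [lra | apply: exprn_ge0; lra].
have NT : 0 <= N * T by apply: mulr_ge0 => //; lra.
lra.
Qed.

Theorem lemma3 (R : rcfType) (n : nat) (k : 'I_n -> R) (eps : R) :
  (forall i j : 'I_n, (i <= j)%N -> k i <= k j) ->
  0 < meanH k ->
  0 < eps -> eps < 1 / (n%:R * (n%:R - 1)) ->
  normAo2 k = eps * meanH k ^+ 2 ->
  n%:R * cubC k - (1 + n%:R * eps) * meanH k * normA2 k >=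
    eps * (1 + n%:R * eps) * (1 - Num.sqrt (n%:R * (n%:R - 1) * eps)) * meanH k ^+ 3.
Proof.
move=> _ H0 e0 he hA.
case: n k H0 he hA => [|[|n]] k H0 he hA.
- by move: H0; rewrite /meanH big_ord0 ltxx.
- by move: he; rewrite subrr mulr0 invr0 mulr0 => /(lt_trans e0); rewrite ltxx.
set N := (n.+2)%:R : R.
have N1 : 1 < N by rewrite /N ltr1n.
set s := Num.sqrt (N * (N - 1) * eps).
have pe : 0 <= N * (N - 1) * eps by apply: mulr_ge0; [apply: mulr_ge0|]; lra.
have s0 : 0 <= s by apply: sqrtr_ge0.
have N0 : N != 0 by apply/eqP; lra.
have N10 : N - 1 != 0 by apply/eqP; lra.
have hs : s ^+ 2 = N * (N - 1) * eps by rewrite sqr_sqrtr.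
have hE : eps = s ^+ 2 / (N * (N - 1)).
  by rewrite hs mulrC mulrA mulVf ?mul1r // mulf_neq0.
have hA2 : normA2 k = meanH k ^+ 2 / N + eps * meanH k ^+ 2.
  move: hA; rewrite /normAo2 -/N => <-; ring.
apply: (aux2 N1 hA2 hE s0 H0 e0).
set m := meanH k / N + s * meanH k / (N * (N - 1)).
set r := (1 - s) * meanH k / N.
have -> : cubC k - (2 * m + r) * normA2 k + (m ^+ 2 + 2 * m * r) * meanH k - N * (m ^+ 2 * r)
  = \sum_(i < n.+2) (k i - m) ^+ 2 * (k i - r).
  have -> : \sum_(i < n.+2) (k i - m) ^+ 2 * (k i - r) = \sum_(i < n.+2)
     (k i ^+ 3 + (- (2 * m + r)) * k i ^+ 2 + (m ^+ 2 + 2 * m * r) * k i + (- (m ^+ 2 * r))).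
    by apply: eq_bigr => i _; ring.
  rewrite sum_cubic -/N; ring.
apply: sumr_ge0 => i _; apply: mulr_ge0; first exact: sqr_ge0.
rewrite subr_ge0.
apply: (aux1 N1 hA2 hE s0 H0).
set t := (meanH k - k i) / (N - 1).
have := @term_le_sum _ _ (fun j => (k j - t) ^+ 2) i (fun j => sqr_ge0 _).
rewrite sum_sq_shift -/N. move=> h. exact h.
Qed.
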